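(* Let $X$ be a real Banach space with $\operatorname{dens} X = \kappa$. If $D \subseteq X$ is covered by fewer than $\operatorname{cf}(\kappa)$ many hyperplanes of $X$, then $D$ does not contain any overcomplete set for $X$.
   Context: A hyperplane of $X$ is a closed linear subspace of codimension one (the kernel of a non-zero bounded linear functional). $\operatorname{dens}$ denotes the density character and $\operatorname{cf}$ the cofinality. A subset $S$ of a Banach space $X$ with $|S| = \operatorname{dens} X$ is called overcomplete (for $X$) if every subset $\Lambda \subseteq S$ with $|\Lambda| = |S|$ is linearly dense in $X$. *)

(* Defs.v *)
From HB Require Import structures.
From mathcomp Require Import all_boot all_order all_algebra.
From mathcomp Require Import all_classical all_reals all_analysis.
Set Implicit Arguments. Unset Strict Implicit. Unset Printing Implicit Defensive.
Import Order.TTheory GRing.Theory Num.Theory.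
Import numFieldNormedType.Exports.
Local Open Scope classical_set_scope.
Local Open Scope ring_scope.
Local Open Scope card_scope.

Section Defs.
Variables (R : realType) (X : completeNormedModType R).

(* S has cardinality dens X = min { |D| : D dense in X } *)
Definition has_dens_card {T : Type} (S : set T) : Prop :=
  (exists D : set X, dense D /\ D #<= S) /\
  (forall D : set X, dense D -> S #<= D).

Definition bounded_linear_functional (f : X -> R) : Prop :=
  (forall (a : R) (x y : X), f (a *: x + y) = a * f x + f y) /\ continuous f.

Definition hyperplane (H : set X) : Prop :=
  exists f : X -> R, bounded_linear_functional f /\ (exists x, f x != 0) /\
    H = f @^-1` [set 0].

Definition lin_span (L : set X) : set X :=
  [set x | exists (n : nat) (v : 'I_n -> X) (a : 'I_n -> R),
      (forall i, L (v i)) /\ x = \sum_(i < n) a i *: v i].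

Definition linearly_dense (L : set X) : Prop := closure (lin_span L) = setT.

Definition overcomplete (S : set X) : Prop :=
  has_dens_card S /\
  forall L : set X, L `<=` S -> L #= S -> linearly_dense L.

End Defs.

(* A strict well-order lt on W such that every proper initial segment has
   cardinality strictly smaller than W: W with lt is (a copy of) the initial
   ordinal of the cardinal |W|. *)
Definition initial_well_order {T : Type} (W : set T) (lt : T -> T -> Prop) : Prop :=
  (forall x, W x -> ~ lt x x) /\
  (forall x y z, W x -> W y -> W z -> lt x y -> lt y z -> lt x z) /\
  (forall x y, W x -> W y -> x = y \/ lt x y \/ lt y x) /\
  (forall A : set T, A `<=` W -> A !=set0 ->
     exists2 m, A m & forall y, A y -> ~ lt y m) /\
  (forall x, W x -> ~ (W #<= [set y | W y /\ lt y x])).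

Definition cofinal {T : Type} (W : set T) (lt : T -> T -> Prop) (C : set T) : Prop :=
  C `<=` W /\ forall x, W x -> exists2 c, C c & ~ lt c x.

(* |I| < cf(W, lt) = min { |C| : C cofinal in W } *)
Definition card_lt_cf (I : Type) {T : Type} (W : set T) (lt : T -> T -> Prop) : Prop :=
  forall C : set T, cofinal W lt C -> (@setT I) #<= C /\ ~ (C #<= @setT I).

(* Main.v *)
Require Import Defs.
From HB Require Import structures.
From mathcomp Require Import all_boot all_order all_algebra.
From mathcomp Require Import all_classical all_reals all_analysis.
Import numFieldNormedType.Exports.
Local Open Scope classical_set_scope.
Local Open Scope ring_scope.
Local Open Scope card_scope.
From mathcomp Require Import lra.
Set Implicit Arguments. Unset Strict Implicit. Unset Printing Implicit Defensive.


Definition cle {T U} (A : set T) (B : set U) : Prop :=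
  A = set0 \/ exists f : T -> U, (forall x, A x -> B (f x)) /\
     (forall x y, A x -> A y -> f x = f y -> x = y).

Lemma cleP T U (A : set T) (B : set U) : A #<= B <-> cle A B.
Proof.
elim/Ppointed: U => U in B *.
- rewrite (empty_eq0 B); split.
  + by move/card_le0P => ->; left.
  + case=> [->|[f [Hf _]]]; first exact: card_ge0.
    by apply/card_le0P; apply/seteqP; split=> // x /Hf.
- split.
  + move/pcard_leP/injfunPex => [f Hf Hi]; right; exists f; split => //.
    by move=> x y Ax Ay; apply: Hi; apply: mem_set.
  + case=> [->|[f [Hf Hi]]]; first exact: card_ge0.
    apply/pcard_leP/injfunPex; exists f => //.
    by move=> x y /set_mem Ax /set_mem Ay; exact: Hi.
Qed.


Lemma set0_or T (A : set T) : A = set0 \/ exists a, A a.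
Proof.
have [[a Aa]|nA] := pselect (A !=set0); first by right; exists a.
by left; apply/nonemptyPn.
Qed.

Lemma cle_rel T U (A : set T) (B : set U) (R : T -> U -> Prop) :
  (forall x, A x -> exists y, B y /\ R x y) ->
  (forall x x' y, A x -> A x' -> R x y -> R x' y -> x = x') -> cle A B.
Proof.
move=> H1 H2.
have [->|[a0 Aa0]] := set0_or A; first by left.
have [y0 [By0 _]] := H1 _ Aa0.
have : forall x, exists y, (A x -> B y /\ R x y).
  move=> x; case: (pselect (A x)) => [/H1 [y Hy]|nAx]; first by exists y.
  by exists y0.
move=> /choice [f Hf].
right; exists f; split; first by move=> x /Hf [].
move=> x y Ax Ay fxy; apply: (H2 x y (f x) Ax Ay); first by case: (Hf x Ax).
by rewrite fxy; case: (Hf y Ay).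
Qed.

Lemma cle_fun T U (A : set T) (B : set U) (f : T -> U) :
  (forall x, A x -> B (f x)) -> (forall x y, A x -> A y -> f x = f y -> x = y) ->
  cle A B.
Proof. by move=> H1 H2; right; exists f. Qed.

Lemma cle_get T U (A : set T) (B : set U) (a : T) : cle A B -> A a ->
  exists f : T -> U, (forall x, A x -> B (f x)) /\
     (forall x y, A x -> A y -> f x = f y -> x = y).
Proof. by case=> // A0 Aa; move: Aa; rewrite A0. Qed.

Lemma cle_refl T (A : set T) : cle A A.
Proof. by right; exists id. Qed.

Lemma cle_sub T (A B : set T) : A `<=` B -> cle A B.
Proof. by move=> AB; right; exists id; split=> // x /AB. Qed.

Lemma cle_trans T U V (A : set T) (B : set U) (C : set V) :
  cle A B -> cle B C -> cle A C.
Proof.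
case=> [->|[f [f1 f2]]]; first by left.
have [->|[a Aa]] := set0_or A; first by left.
move=> hBC; have [g [g1 g2]] := cle_get hBC (f1 _ Aa).
right; exists (g \o f); split=> [x /f1 /g1 //|x y Ax Ay /= e].
by apply: f2 => //; apply: g2 => //; apply: f1.
Qed.

Lemma cle_image T U (A : set T) (f : T -> U) : cle (f @` A) A.
Proof.
apply: (@cle_rel _ _ _ _ (fun y x => f x = y)).
  by move=> _ [x Ax <-]; exists x.
by move=> _ _ x _ _ <- <-.
Qed.

Lemma cle_total T U (A : set T) (B : set U) : cle A B \/ cle B A.
Proof.
pose P := fun G : set (T * U) =>
  [/\ forall p, G p -> A p.1 /\ B p.2,
      forall p q, G p -> G q -> p.1 = q.1 -> p.2 = q.2 &
      forall p q, G p -> G q -> p.2 = q.2 -> p.1 = q.1].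
have chainP : forall F : set (set (T * U)), F `<=` P -> total_on F subset ->
    P (\bigcup_(X in F) X).
  move=> F FP Ftot; split.
  - by move=> p [G /FP [h _ _] /h].
  - move=> p q [G1 F1 G1p] [G2 F2 G2q].
    have [s|s] := Ftot _ _ F1 F2.
      by have [_ h _] := FP _ F2; apply: h => //; apply: s.
    by have [_ h _] := FP _ F1; apply: h => //; apply: s.
  - move=> p q [G1 F1 G1p] [G2 F2 G2q].
    have [s|s] := Ftot _ _ F1 F2.
      by have [_ _ h] := FP _ F2; apply: h => //; apply: s.
    by have [_ _ h] := FP _ F1; apply: h => //; apply: s.
have [G [[G1 G2 G3] Gmax]] := Zorn_bigcup chainP.
have [domA|] := pselect (forall a, A a -> exists b, G (a, b)).
  left; apply: (@cle_rel _ _ _ _ (fun a b => G (a, b))).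
    by move=> a /domA [b Gab]; exists b; split=> //; have [] := G1 _ Gab.
  by move=> x x' y _ _ Gx Gx'; have := G3 _ _ Gx Gx' erefl.
move=> /existsNP [a /not_implyP [Aa nGa]].
have [ranB|] := pselect (forall b, B b -> exists a, G (a, b)).
  right; apply: (@cle_rel _ _ _ _ (fun b a => G (a, b))).
    by move=> b /ranB [a' Gab]; exists a'; split=> //; have [] := G1 _ Gab.
  by move=> x x' y _ _ Gx Gx'; have := G2 _ _ Gx Gx' erefl.
move=> /existsNP [b /not_implyP [Bb nGb]].
exfalso; apply: (Gmax (G `|` [set (a, b)])).
  split; first by move=> p Gp; left.
  by move=> /(_ (a, b) (or_intror erefl)) Gab; apply: nGa; exists b.
split.
- by move=> p [/G1 //|->].
- move=> p q [Gp|->] [Gq|->] //=.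
  + by move=> e; apply: G2.
  + by move=> e; exfalso; apply: nGa; exists p.2; rewrite -e; case: p Gp {e}.
  + by move=> e; exfalso; apply: nGa; exists q.2; rewrite e; case: q Gq {e}.
- move=> p q [Gp|->] [Gq|->] //=.
  + by move=> e; apply: G3.
  + by move=> e; exfalso; apply: nGb; exists p.1; rewrite -e; case: p Gp {e}.
  + by move=> e; exfalso; apply: nGb; exists q.1; rewrite e; case: q Gq {e}.
Qed.


Lemma cle_relP T U (A : set T) (B : set U) : cle A B ->
  exists R : T -> U -> Prop, (forall x, A x -> exists y, B y /\ R x y) /\
  (forall x x' y, A x -> A x' -> R x y -> R x' y -> x = x').
Proof.
case=> [->|[f [f1 f2]]]; first by exists (fun _ _ => False); split.
exists (fun x y => f x = y); split; first by move=> x Ax; exists (f x); split=> //; apply: f1.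
by move=> x x' y Ax Ax' <- e; apply: f2.
Qed.

Lemma cle_prod T U T' U' (A : set T) (B : set U) (A' : set T') (B' : set U') :
  cle A B -> cle A' B' -> cle (A `*` A') (B `*` B').
Proof.
move=> /cle_relP [R1 [R11 R12]] /cle_relP [R2 [R21 R22]].
apply: (@cle_rel _ _ _ _ (fun p q => R1 p.1 q.1 /\ R2 p.2 q.2)).
  move=> [x x'] [/= /R11 [y [By Ry]] /R21 [y' [By' Ry']]].
  by exists (y, y').
move=> [x1 x2] [x1' x2'] [y1 y2] [/= A1 A2] [/= A1' A2'] [/= r1 r2] [/= r1' r2'].
by rewrite (R12 _ _ _ A1 A1' r1 r1') (R22 _ _ _ A2 A2' r2 r2').
Qed.

Definition domG T (G : set ((T * T) * T)) : set T := fun t => exists u, G ((t, t), u).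

Definition hP T (A : set T) (G : set ((T * T) * T)) : Prop :=
  [/\ (forall p, G p -> [/\ domG G p.1.1, domG G p.1.2 & domG G p.2]),
      (forall p : T * T, domG G p.1 -> domG G p.2 -> exists u, G (p, u)),
      (forall p q, G p -> G q -> p.1 = q.1 -> p.2 = q.2),
      (forall p q, G p -> G q -> p.2 = q.2 -> p.1 = q.1) &
      (domG G `<=` A /\ (G = set0 \/ cle [set: nat] (domG G)))].

Lemma domG_sub T (G G' : set ((T * T) * T)) : G `<=` G' -> domG G `<=` domG G'.
Proof. by move=> s t [u Gu]; exists u; apply: s. Qed.

Lemma hP_chain T (A : set T) (F : set (set ((T * T) * T))) :
  F `<=` hP A -> total_on F subset -> hP A (\bigcup_(G in F) G).
Proof.
move=> FP Ftot.
have Dm : forall G, F G -> domG G `<=` domG (\bigcup_(G in F) G).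
  by move=> G FG; apply: domG_sub; exact: bigcup_sup.
have DU : forall t, domG (\bigcup_(G in F) G) t -> exists2 G, F G & domG G t.
  by move=> t [u [G FG Gu]]; exists G => //; exists u.
split.
- move=> p [G FG Gp]; have [h _ _ _ _] := FP _ FG; have [h1 h2 h3] := h _ Gp.
  by split; apply: (Dm _ FG).
- move=> p /DU [G1 F1 D1] /DU [G2 F2 D2]; have [s|s] := Ftot _ _ F1 F2.
  + have [_ h _ _ _] := FP _ F2; have [u Gu] := h p (domG_sub s D1) D2.
    by exists u; exists G2.
  + have [_ h _ _ _] := FP _ F1; have [u Gu] := h p D1 (domG_sub s D2).
    by exists u; exists G1.
- move=> p q [G1 F1 G1p] [G2 F2 G2q].
  have [s|s] := Ftot _ _ F1 F2.
    by have [_ _ h _ _] := FP _ F2; apply: h => //; apply: s.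
  by have [_ _ h _ _] := FP _ F1; apply: h => //; apply: s.
- move=> p q [G1 F1 G1p] [G2 F2 G2q].
  have [s|s] := Ftot _ _ F1 F2.
    by have [_ _ _ h _] := FP _ F2; apply: h => //; apply: s.
  by have [_ _ _ h _] := FP _ F1; apply: h => //; apply: s.
- split.
    by move=> t /DU [G FG Dt]; have [_ _ _ _ [h _]] := FP _ FG; exact: h.
  have [->|[a [G FG Ga]]] := set0_or (\bigcup_(G in F) G); first by left.
  right; have [_ _ _ _ [_ [G0|inf]]] := FP _ FG; first by move: Ga; rewrite G0.
  exact: cle_trans inf (cle_sub (Dm _ FG)).
Qed.


Lemma hessenberg T (A : set T) : cle [set: nat] A -> cle (A `*` A) A.
Proof.
move=> Ainf.
have t0 : [set: nat] 0%N by [].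
have [io [ioA ioI]] := cle_get Ainf t0.
have ioI' : forall m n, io m = io n -> m = n by move=> m n; apply: ioI.
have pI : injective (@pickle (nat * nat)%type) := pcan_inj (@pickleK_inv _).
pose G0 : set ((T * T) * T) :=
  [set p | exists m n, p = ((io m, io n), io (pickle (m, n)))].
have DG0 : forall t, domG G0 t <-> exists m, t = io m.
  move=> t; split; first by move=> [u [m [n [-> _ _]]]]; exists m.
  by move=> [m ->]; exists (io (pickle (m, m))); exists m, m.
have hG0 : hP A G0.
  split.
  - move=> _ [m [n ->]] /=; split; apply/DG0; by eexists.
  - move=> [x y] /DG0 [m /= ->] /DG0 [n /= ->]; exists (io (pickle (m, n))).
    by exists m, n.
  - move=> _ _ [m [n ->]] [m' [n' ->]] /= [/ioI' -> /ioI' ->].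
    by [].
  - move=> _ _ [m [n ->]] [m' [n' ->]] /= /ioI' /pI [-> ->].
    by [].
  - split; first by move=> t /DG0 [m ->]; apply: ioA.
    right; apply: (@cle_fun _ _ _ _ io) => //.
    by move=> m _; apply/DG0; exists m.
have [G [HG Gmax]] := Zorn_bigcup (@hP_chain T A).
have [HG1 HG2 HG3 HG4 [HG5 [G00|Dinf]]] := HG.
  exfalso; apply: (Gmax G0) => //; split; first by rewrite G00.
  move=> /(_ ((io 0%N, io 0%N), io (pickle (0%N, 0%N)))) h.
  by have := h (ex_intro _ 0%N (ex_intro _ 0%N erefl)); rewrite G00.
set D := domG G in HG1 HG2 HG5 Dinf.
have [j [jD jI]] := cle_get Dinf t0.
have jI' : forall m n, j m = j n -> m = n by move=> m n; apply: jI.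
have d0 := jD 0%N t0.
have : forall p : T * T, exists u, D p.1 -> D p.2 -> G (p, u).
  move=> p; case: (pselect (D p.1 /\ D p.2)) => [[h1 h2]|h].
    by have [u Gu] := HG2 p h1 h2; exists u.
  by exists (j 0%N) => h1 h2; exfalso; apply: h.
move=> /choice [phi Hphi].
have phiD : forall p, D p.1 -> D p.2 -> D (phi p).
  by move=> p h1 h2; have [] := HG1 _ (Hphi p h1 h2).
have phiI : forall p q, D p.1 -> D p.2 -> D q.1 -> D q.2 -> phi p = phi q -> p = q.
  by move=> p q h1 h2 h3 h4 e; apply: (HG4 _ _ (Hphi p h1 h2) (Hphi q h3 h4) e).
have ext : cle (A `\` D) D.
  have [//|hDC] := cle_total (A `\` D) D.
  exfalso.
  have [e [eC eI]] := cle_get hDC d0.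
  pose C := e @` D.
  have CnD : forall t, C t -> ~ D t by move=> t [d Dd <-]; have [] := eC d Dd.
  have CA : forall t, C t -> A t by move=> t [d Dd <-]; have [] := eC d Dd.
  have : forall c, exists d, C c -> D d /\ e d = c.
    move=> c; case: (pselect (C c)) => [[d Dd <-]|nC]; first by exists d.
    by exists (j 0%N).
  move=> /choice [psi Hpsi].
  pose r := fun t => if pselect (D t) then t else psi t.
  pose tg := fun p : T * T =>
    if pselect (D p.1) then j 0%N else if pselect (D p.2) then j 1%N else j 2%N.
  pose k := fun p => e (phi (tg p, phi (r p.1, r p.2))).
  pose Tg := fun p : T * T => [/\ D p.1 \/ C p.1, D p.2 \/ C p.2 & ~ (D p.1 /\ D p.2)].
  have rD : forall t, D t \/ C t -> D (r t).
    move=> t Dt; rewrite /r; case: pselect => // nD.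
    by case: Dt => // /Hpsi [].
  have rI : forall t t', D t \/ C t -> D t' \/ C t' -> (D t <-> D t') -> r t = r t' -> t = t'.
    move=> t t' Dt Dt' iff; rewrite /r; case: pselect => h; case: pselect => h' //.
    - by exfalso; apply: h'; apply/iff.
    - by exfalso; apply: h; apply/iff.
    - case: Dt => // Ct; case: Dt' => // Ct' /= epsi.
      by have [_ <-] := Hpsi _ Ct; have [_ <-] := Hpsi _ Ct'; rewrite epsi.
  have tgD : forall p, D (tg p).
    by move=> p; rewrite /tg; case: pselect => ?; [|case: pselect => ?]; apply: (jD).
  have kD : forall p, Tg p -> D (phi (tg p, phi (r p.1, r p.2))).
    by move=> p [h1 h2 h3]; apply: (phiD) => //=; apply: (phiD) => /=; apply: (rD).
  have kC : forall p, Tg p -> C (k p).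
    by move=> p Tp; exists (phi (tg p, phi (r p.1, r p.2))) => //; apply: (kD).
  have tgI : forall p q, Tg p -> Tg q -> tg p = tg q ->
      (D p.1 <-> D q.1) /\ (D p.2 <-> D q.2).
    move=> [p1 p2] [q1 q2] [/= _ _ hp] [/= _ _ hq]; rewrite /tg /=.
    case: pselect => a; case: pselect => b; case: pselect => c; case: pselect => d;
      move=> /jI' //= _; tauto.
  have kI : forall p q, Tg p -> Tg q -> k p = k q -> p = q.
    move=> p q Tp Tq /eI => /(_ (kD p Tp) (kD q Tq)).
    move=> /phiI /= => /(_ (tgD p) _ (tgD q)).
    have [hp1 hp2 _] := Tp; have [hq1 hq2 _] := Tq.
    move=> /(_ (phiD (r p.1, r p.2) (rD _ hp1) (rD _ hp2)) (phiD (r q.1, r q.2) (rD _ hq1) (rD _ hq2))) [etg].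
    move=> /phiI /= => /(_ (rD _ hp1) (rD _ hp2) (rD _ hq1) (rD _ hq2)) [e1 e2].
    have [i1 i2] := tgI _ _ Tp Tq etg.
    case: p q {Tp Tq etg} hp1 hp2 hq1 hq2 e1 e2 i1 i2 => [p1 p2] [q1 q2] /= hp1 hp2 hq1 hq2 e1 e2 i1 i2.
    by rewrite (rI _ _ hp1 hq1 i1 e1) (rI _ _ hp2 hq2 i2 e2).
  pose G' := G `|` [set x | Tg x.1 /\ x.2 = k x.1].
  have DG' : forall t, domG G' t <-> D t \/ C t.
    move=> t; split.
    - move=> [u [Gt|[[h1 _ _] _]]]; [left; exists u => // | exact: h1].
    - case=> [[u Gu]|Ct]; first by exists u; left.
      exists (k (t, t)); right; split => //; split => /=; [right|right|] => //.
      by move=> [h _]; apply: (CnD _ Ct).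
  have hG' : hP A G'.
    split.
    - move=> p [Gp|[Tp ep]].
      + by have [a b c] := HG1 _ Gp; split; apply/DG'; left.
      + have [a b _] := Tp; split; apply/DG' => //; right; rewrite ep; exact: kC.
    - move=> p /DG' h1 /DG' h2.
      case: (pselect (D p.1 /\ D p.2)) => [[d1 d2]|nd].
        by have [u Gu] := HG2 p d1 d2; exists u; left.
      by exists (k p); right; split.
    - move=> p q [Gp|[Tp ep]] [Gq|[Tq eq]] ee.
      + exact: HG3.
      + exfalso; have [a b _] := HG1 _ Gp; have [_ _ c] := Tq; apply: c; rewrite -ee; split => //.
      + exfalso; have [a b _] := HG1 _ Gq; have [_ _ c] := Tp; apply: c; rewrite ee; split => //.
      + by rewrite ep eq ee.
    - move=> p q [Gp|[Tp ep]] [Gq|[Tq eq]] ee.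
      + exact: HG4.
      + exfalso; have [_ _ a] := HG1 _ Gp; apply: (CnD _ (kC _ Tq)); rewrite -eq -ee //.
      + exfalso; have [_ _ a] := HG1 _ Gq; apply: (CnD _ (kC _ Tp)); rewrite -ep ee //.
      + by apply: kI => //; rewrite -ep -eq.
    - split.
      + by move=> t /DG' [/HG5 //|/CA //].
      + by right; apply: (cle_trans Dinf (cle_sub _)) => t Dt; apply/DG'; left.
  apply: (Gmax G' _ hG'); split; first by move=> x Gx; left.
  move=> sub.
  have Ce : C (e (j 0%N)) by exists (j 0%N) => //; apply: (jD).
  have Tge : Tg (e (j 0%N), e (j 0%N)).
    by split => /=; [right|right|case=> /(CnD _ Ce)].
  have /sub Gx : G' ((e (j 0%N), e (j 0%N)), k (e (j 0%N), e (j 0%N))) by right.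
  by have [/(CnD _ Ce)] := HG1 _ Gx.
have [h [hD hI]] : exists h : T -> T, (forall x, (A `\` D) x -> D (h x)) /\
    (forall x y, (A `\` D) x -> (A `\` D) y -> h x = h y -> x = y).
  have [E0|[a Ha]] := set0_or (A `\` D).
    by exists id; split => x; rewrite E0.
  exact: cle_get ext Ha.
have j01 : j 0%N <> j 1%N by move/jI'.
have AD : cle A (D `*` D).
  apply: (@cle_rel _ _ _ _ (fun x p => (D x /\ p = (x, j 0%N)) \/ (~ D x /\ p = (h x, j 1%N)))).
    move=> x Ax; case: (pselect (D x)) => Dx.
      by exists (x, j 0%N); split; [split => //; apply: (jD)|left].
    by exists (h x, j 1%N); split; [split => /=; [apply: hD|apply: (jD)]|right].
  move=> x x' p Ax Ax' [[Dx ->]|[nDx ->]] [[Dx' e]|[nDx' e]].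
  + by case: e.
  + by case: e => _ /j01.
  + by case: e => _ /esym /j01.
  + by case: e => ee; apply: hI => //; split.
have DDD : cle (D `*` D) D.
  apply: (@cle_fun _ _ _ _ phi); first by move=> p [h1 h2]; apply: (phiD).
  by move=> p q [h1 h2] [h3 h4]; apply: (phiI).
apply: cle_trans (cle_prod (cle_trans AD DDD) (cle_trans AD DDD)) _.
exact: cle_trans DDD (cle_sub HG5).
Qed.


Lemma cle_getd T U (A : set T) (B : set U) (u0 : U) : cle A B ->
  exists f : T -> U, (forall x, A x -> B (f x)) /\
     (forall x y, A x -> A y -> f x = f y -> x = y).
Proof.
case=> [->|//]; by exists (fun _ => u0).
Qed.

Lemma sq_small T U (W : set T) (B : set U) : cle [set: nat] W ->
  ~ cle W B -> ~ cle W (B `*` B).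
Proof.
move=> Winf nB WBB.
case: (pselect (cle [set: nat] B)) => [Binf|nBinf].
  by apply: nB; apply: cle_trans WBB (hessenberg Binf).
have fB : finite_set B by apply/finite_setPn => /cleP.
have fBB := finite_setX fB fB.
have fW : finite_set W := card_le_finite (proj2 (cleP _ _) WBB) fBB.
by move: fW => /finite_setPn; apply; apply/cleP.
Qed.

Lemma small_prod T U V (W : set T) (A : set U) (B : set V) : cle [set: nat] W ->
  ~ cle W A -> ~ cle W B -> ~ cle W (A `*` B).
Proof.
move=> Winf nA nB WAB.
have [AB|BA] := cle_total A B.
  by apply: (sq_small Winf nB); apply: cle_trans WAB (cle_prod AB (cle_refl B)).
by apply: (sq_small Winf nA); apply: cle_trans WAB (cle_prod (cle_refl A) BA).
Qed.

Definition seg T (W : set T) (lt : T -> T -> Prop) (x : T) : set T :=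
  [set y | W y /\ lt y x].

Lemma lemma_a T (W : set T) (lt : T -> T -> Prop) (A : set T) :
  (forall x y z, W x -> W y -> W z -> lt x y -> lt y z -> lt x z) ->
  (forall x y, W x -> W y -> x = y \/ lt x y \/ lt y x) ->
  (forall x, W x -> exists2 y, W y & lt x y) ->
  cle [set: nat] W ->
  A `<=` W -> ~ cle W A -> exists2 x, W x & cle A (seg W lt x).
Proof.
move=> tr tot nomax Winf AW nA.
apply: contrapT => nex.
have H : forall x, W x -> cle (seg W lt x) A.
  move=> x Wx; have [h|//] := cle_total A (seg W lt x).
  by exfalso; apply: nex; exists x.
case: (pselect (exists2 w, W w & forall a, A a -> ~ lt w a)) => [[w Ww Hw]|nb].
  have [w' Ww' ww'] := nomax w Ww.
  apply: nex; exists w' => //; apply: cle_sub => a Aa; split; first exact: AW.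
  have [e|[l|l]] := tot a w (AW _ Aa) Ww.
  - by rewrite e.
  - exact: (tr a w w' (AW _ Aa) Ww Ww' l ww').
  - by exfalso; apply: (Hw a Aa l).
have cof : forall w, W w -> exists a, A a /\ lt w a.
  move=> w Ww; apply: contrapT => nn; apply: nb; exists w => // a Aa lwa.
  by apply: nn; exists a.
have : forall w, exists a, W w -> A a /\ lt w a.
  move=> w; case: (pselect (W w)) => Ww; last by exists w.
  by have [a ha] := cof w Ww; exists a.
move=> /choice [aw Haw].
have : forall a, exists g : T -> T, A a -> (forall x, seg W lt a x -> A (g x)) /\
   (forall x y, seg W lt a x -> seg W lt a y -> g x = g y -> x = y).
  move=> a; case: (pselect (A a)) => Aa; last by exists id.
  by have [g hg] := cle_getd a (H a (AW _ Aa)); exists g.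
move=> /choice [g Hg].
apply: (small_prod Winf nA nA).
apply: (@cle_fun _ _ _ _ (fun w => (aw w, g (aw w) w))).
  move=> w Ww; have [Aa l] := Haw w Ww; split => //=.
  by have [h1 _] := Hg _ Aa; apply: h1; split.
move=> w v Ww Wv [e1 e2].
have [Aa l] := Haw w Ww; have [Aa' l'] := Haw v Wv.
have [_ h2] := Hg _ Aa'.
rewrite e1 in e2 l.
by apply: h2 => //; split.
Qed.

Lemma lemma_K T I (W : set T) (lt : T -> T -> Prop) (A : I -> set T) :
  (forall x, W x -> ~ lt x x) ->
  (forall x y z, W x -> W y -> W z -> lt x y -> lt y z -> lt x z) ->
  (forall x y, W x -> W y -> x = y \/ lt x y \/ lt y x) ->
  (forall x, W x -> ~ cle W (seg W lt x)) ->
  (forall C, C `<=` W -> (forall x, W x -> exists2 c, C c & ~ lt c x) ->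
      cle [set: I] C /\ ~ cle C [set: I]) ->
  (forall w, W w -> exists i, A i w) -> (forall i, ~ cle W (A i)) -> False.
Proof.
move=> irr tr tot init cf cov sm.
have [W0|[w0 Ww0]] := set0_or W.
  have s0 : @set0 T `<=` W by [].
  have c0 : forall x, W x -> exists2 c, set0 c & ~ lt c x by move=> x; rewrite W0.
  have [_ h] := cf set0 s0 c0.
  by apply: h; left.
have [i0 _] := cov _ Ww0.
have nomax : forall x, W x -> exists2 y, W y & lt x y.
  move=> x Wx; apply: contrapT => nn.
  have sx : [set x] `<=` W by move=> y ->.
  have [_ h] := cf [set x] sx
    (fun y Wy => ex_intro2 _ _ x erefl (fun l => nn (ex_intro2 _ _ y Wy l))).
  apply: h; apply: (@cle_fun _ _ _ _ (fun _ => i0)) => //.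
  by move=> a b -> ->.
have Winf : cle [set: nat] W.
  have : forall x, exists y, W x -> W y /\ lt x y.
    move=> x; case: (pselect (W x)) => Wx; last by exists x.
    by have [y Wy l] := nomax x Wx; exists y.
  move=> /choice [nx Hnx].
  pose s := fix s n := if n is n'.+1 then nx (s n') else w0.
  have sW : forall n, W (s n) by elim => //= n IH; have [] := Hnx _ IH.
  have slt : forall m k, lt (s m) (s (m + k.+1)%N).
    move=> m; elim=> [|k IH]; first by rewrite addn1 /=; have [] := Hnx _ (sW m).
    rewrite addnS /=; have [_ l] := Hnx _ (sW (m + k.+1)%N).
    exact: (tr _ _ _ (sW m) (sW (m + k.+1)%N) (sW (m + k.+1).+1%N) IH l).
  apply: (@cle_fun _ _ _ _ s) => // m n _ _ e.
  case: (ltngtP m n) => // h.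
  - have := slt m (n - m.+1)%N; rewrite addnS -addSn subnKC // e.
    by move/(irr _ (sW n)).
  - have := slt n (m - n.+1)%N; rewrite addnS -addSn subnKC // e.
    by move/(irr _ (sW n)).
have sm' : forall i, ~ cle W (W `&` A i).
  by move=> i h; apply: (sm i); apply: cle_trans h (cle_sub _) => x [].
have : forall i, exists x, W x /\ cle (W `&` A i) (seg W lt x).
  move=> i; have [x Wx h] := lemma_a tr tot nomax Winf (fun x (hx : (W `&` A i) x) => proj1 hx) (sm' i).
  by exists x.
move=> /choice [xi Hxi].
have [w Ww bnd] : exists2 w, W w & forall i, lt (xi i) w.
  apply: contrapT => nn.
  have sub : xi @` setT `<=` W by move=> _ [i _ <-]; have [] := Hxi i.
  have cof : forall x, W x -> exists2 c, (xi @` setT) c & ~ lt c x.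
    move=> x Wx; apply: contrapT => nc; apply: nn; exists x => // i.
    apply: contrapT => nl; apply: nc; exists (xi i) => //; by exists i.
  have [_ h] := cf _ sub cof.
  by apply: h; exact: cle_image.
have : forall i, exists h : T -> T, (forall x, (W `&` A i) x -> seg W lt w (h x)) /\
    (forall x y, (W `&` A i) x -> (W `&` A i) y -> h x = h y -> x = y).
  move=> i; have [Wx c] := Hxi i; apply: (cle_getd w0).
  apply: cle_trans c (cle_sub _) => y [Wy l]; split => //.
  exact: (tr _ _ _ Wy Wx Ww l (bnd i)).
move=> /choice [h Hh].
have : forall v, exists i, W v -> A i v.
  move=> v; case: (pselect (W v)) => Wv; last by exists i0.
  by have [i Ai] := cov v Wv; exists i.
move=> /choice [iv Hiv].
have Wcof : ~ cle W [set: I].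
  have [_ hh] := cf W (fun x h => h) (fun x Wx => ex_intro2 _ _ x Wx (irr x Wx)).
  exact: hh.
apply: (small_prod Winf Wcof (init w Ww)).
apply: (@cle_fun _ _ _ _ (fun v => (iv v, h (iv v) v))).
  move=> v Wv; split => //=; have [h1 _] := Hh (iv v); apply: h1; split => //.
  exact: Hiv.
move=> v v' Wv Wv' [e1 e2]; have [_ h2] := Hh (iv v').
rewrite e1 in e2; apply: h2 => //; split => //; last exact: Hiv.
by rewrite -e1; exact: Hiv.
Qed.


Import GRing.Theory Num.Theory.

Lemma hyper_span (R : realType) (X : completeNormedModType R) (f : X -> R) :
  (forall (a : R) (x y : X), f (a *: x + y) = a * f x + f y) ->
  forall n (a : 'I_n -> R) (v : 'I_n -> X), (forall i, f (v i) = 0) ->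
  f (\sum_(i < n) a i *: v i) = 0.
Proof.
move=> lin.
have f0 : f 0 = 0.
  have h := lin 1 0 0; rewrite scaler0 addr0 mul1r in h; lra.
elim=> [|n IH] a v hv; first by rewrite big_ord0.
rewrite big_ord_recl lin hv mulr0 add0r.
exact: (IH (fun i => a (lift ord0 i)) (fun i => v (lift ord0 i))).
Qed.

Unset Implicit Arguments. Set Strict Implicit.

(* kappa = dens X is represented by an initial well-order (W, lt) with
   |W| = dens X; cf(kappa) is the least size of a cofinal subset of W. *)
Theorem proposition3p10 (R : realType) (X : completeNormedModType R)
  (T : Type) (W : set T) (lt : T -> T -> Prop)
  (I : Type) (H : I -> set X) (D : set X) :
  initial_well_order W lt ->
  has_dens_card X W ->
  card_lt_cf I W lt ->
  (forall i, hyperplane (H i)) ->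
  D `<=` \bigcup_(i in setT) H i ->
  ~ (exists S : set X, S `<=` D /\ overcomplete S).
Proof.
move=> [irr [tr [tot [_ init']]]] [[D1 [dD1 D1W]] Wmin] hcf hH hD.
move=> [S [SD [[[D0 [dD0 D0S]] Smin] ovc]]].
have WS : cle W S by apply/cleP; exact: (card_le_trans (Wmin _ dD0) D0S).
have SW : cle S W by apply/cleP; exact: (card_le_trans (Smin _ dD1) D1W).
have [g [gS gI]] := cle_getd (0 : X) WS.
pose A := fun i => [set w | W w /\ H i (g w)].
apply: (@lemma_K T I W lt A irr tr tot).
- by move=> x Wx /cleP; exact: init' x Wx.
- move=> C sub cof; have [h1 h2] := hcf C (conj sub cof); split; first exact/cleP.
  by move=> /cleP.
- by move=> w Ww; have [i _ Hi] := hD _ (SD _ (gS _ Ww)); exists i.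
- move=> i WA.
  pose L := S `&` H i.
  have WL : cle W L.
    apply: cle_trans WA _; apply: (@cle_fun _ _ _ _ g).
      by move=> w [Ww Hw]; split => //; exact: gS.
    by move=> x y [Wx _] [Wy _]; exact: gI.
  have LS : L #= S.
    apply: Cantor_Bernstein; apply/cleP; first exact: cle_sub (@subIsetl _ _ _).
    exact: cle_trans SW WL.
  have := ovc L (@subIsetl _ S (H i)) LS; rewrite /linearly_dense => cl.
  have [f0 [[lin cont] [[x0 nx0] Hi]]] := hH i.
  have span_sub : lin_span L `<=` H i.
    move=> x [n [v [a [vL ->]]]]; rewrite Hi /=; apply: hyper_span => // k.
    by have := (vL k).2; rewrite Hi.
  have clH : closed (H i).
    rewrite Hi; apply: preimage_closed; last exact: closed_eq.
    by move=> x _; exact: cont.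
  have : H i x0.
    rewrite ((closure_id (H i)).1 clH); apply: (closureS span_sub).
    by rewrite cl.
  by rewrite Hi /= => e; move: nx0; rewrite e eqxx.
Qed.
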